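(* Let $\mathbf{S}=\mathbf{V}\boldsymbol{\Lambda}\mathbf{V}^{\mathsf{H}}$ and $\mathbf{E}=\mathbf{U}\mathbf{M}\mathbf{U}^{\mathsf{H}}$ be $N\times N$ matrices, with $\mathbf{V}=[\mathbf{v}_1,\dots,\mathbf{v}_N]$ and $\mathbf{U}$ unitary, $\boldsymbol{\Lambda}$ diagonal and $\mathbf{M}=\mathrm{diag}(m_1,\dots,m_N)$ diagonal, such that $\|\mathbf{E}\|\le\varepsilon$. Then there is a matrix $\mathbf{E}_U$ with $\|\mathbf{E}_U\|\le\varepsilon\delta$, where $\delta=(\|\mathbf{U}-\mathbf{V}\|+1)^2-1$, such that for every eigenvector $\mathbf{v}_i$ of $\mathbf{S}$, $$\mathbf{E}\mathbf{v}_i=m_i\mathbf{v}_i+\mathbf{E}_U\mathbf{v}_i.$$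
   Context: $\|\cdot\|$ denotes the spectral (operator) norm. *)

(* Defs.v *)
From HB Require Import structures.
From mathcomp Require Import all_boot all_order all_algebra.
From mathcomp Require Import complex.
From mathcomp Require Import boolp classical_sets reals.
Set Implicit Arguments. Unset Strict Implicit. Unset Printing Implicit Defensive.
Import Order.TTheory GRing.Theory Num.Theory.
Local Open Scope ring_scope.
Local Open Scope classical_set_scope.

Definition cabs {R : realType} (z : R[i]) : R := ComplexField.Normc.normc z.

Definition vnorm {R : realType} {n : nat} (x : 'cV[R[i]]_n) : R :=
  Num.sqrt (\sum_(k < n) cabs (x k 0) ^+ 2).

Definition specnorm {R : realType} {n : nat} (A : 'M[R[i]]_n) : R :=
  sup [set vnorm (A *m x) | x in [set x : 'cV[R[i]]_n | vnorm x <= 1]].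

Definition adjmx {R : realType} {m n : nat} (A : 'M[R[i]]_(m, n)) : 'M[R[i]]_(n, m) :=
  (map_mx (@conjc R) A)^T.

Definition unitary {R : realType} {n : nat} (U : 'M[R[i]]_n) : Prop :=
  U *m adjmx U = 1%:M /\ adjmx U *m U = 1%:M.

(* Main.v *)
Require Import Defs.
From HB Require Import structures.
From mathcomp Require Import all_boot all_order all_algebra.
From mathcomp Require Import complex.
From mathcomp Require Import boolp classical_sets reals.
From mathcomp Require Import ring lra.
Import Order.TTheory GRing.Theory Num.Theory.
Local Open Scope ring_scope.
Local Open Scope classical_set_scope.
Local Open Scope complex_scope.
Section S.
Variable R : realType.
Implicit Types (z w : R[i]).

Lemma cabsC z : (cabs z)%:C = `|z|.
Proof. by case: z => a b; rewrite normc_def. Qed.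

Lemma cabs_ge0 z : 0 <= cabs z.
Proof. by rewrite -ler0c cabsC normr_ge0. Qed.

Lemma cabsD z w : cabs (z + w) <= cabs z + cabs w.
Proof. by rewrite -lecR rmorphD /= !cabsC ler_normD. Qed.

Lemma cabsM z w : cabs (z * w) = cabs z * cabs w.
Proof. by apply: complexI; rewrite rmorphM /= !cabsC normrM. Qed.

Lemma cabsN z : cabs (- z) = cabs z.
Proof. by apply: complexI; rewrite !cabsC normrN. Qed.

Lemma cabsJ z : cabs (z^*)%C = cabs z.
Proof. by apply: complexI; rewrite !cabsC normcJ. Qed.

Lemma cabs_sqC z : (cabs z ^+ 2)%:C = z^*%C * z.
Proof. by rewrite rmorphXn /= cabsC sqr_normc mulrC. Qed.

Lemma cabs_real (r : R) : 0 <= r -> cabs r%:C = r.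
Proof. by move=> r0; apply: complexI; rewrite cabsC ger0_norm // ler0c. Qed.

Lemma CS n (a b : 'I_n -> R) :
  (\sum_(i < n) a i * b i) ^+ 2 <= (\sum_(i < n) a i ^+ 2) * (\sum_(i < n) b i ^+ 2).
Proof.
elim: n a b => [|n IH] a b; first by rewrite !big_ord0 expr0n mul0r.
rewrite !big_ord_recr /=.
have := IH (fun i => a (widen_ord (leqnSn n) i)) (fun i => b (widen_ord (leqnSn n) i)).
have hA : 0 <= \sum_(i < n) a (widen_ord (leqnSn n) i) ^+ 2.
  by apply: sumr_ge0 => i _; apply: sqr_ge0.
have hB : 0 <= \sum_(i < n) b (widen_ord (leqnSn n) i) ^+ 2.
  by apply: sumr_ge0 => i _; apply: sqr_ge0.
move: hA hB.
set s := \sum_(i < n) _ * _; set A := \sum_(i < n) a _ ^+ 2; set B := \sum_(i < n) b _ ^+ 2.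
set p := a ord_max; set q := b ord_max.
move=> hA hB hs.
have key : 2 * s * p * q <= A * q ^+ 2 + B * p ^+ 2.
  have [A0|A0] := eqVneq A 0.
    have s0 : s = 0 by apply/eqP; rewrite -sqrf_eq0 eq_le sqr_ge0 andbT; move: hs; rewrite A0 mul0r.
    by rewrite A0 s0 !mul0r mulr0 !mul0r add0r mulr_ge0 // sqr_ge0.
  have Ap : 0 < A by rewrite lt_def A0 hA.
  have h1 : 0 <= (A * q - s * p) ^+ 2 + (A * B - s ^+ 2) * p ^+ 2.
    by apply: addr_ge0; [apply: sqr_ge0 | apply: mulr_ge0; [rewrite subr_ge0|apply: sqr_ge0]].
  have h2 : A * (A * q ^+ 2 + B * p ^+ 2 - 2 * s * p * q) = (A * q - s * p) ^+ 2 + (A * B - s ^+ 2) * p ^+ 2 by ring.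
  rewrite -subr_ge0; rewrite -h2 in h1; by rewrite -(pmulr_rge0 _ Ap).
nra.
Qed.

Lemma minkowski n (a b : 'I_n -> R) :
  Num.sqrt (\sum_(i < n) (a i + b i) ^+ 2) <= Num.sqrt (\sum_(i < n) a i ^+ 2) + Num.sqrt (\sum_(i < n) b i ^+ 2).
Proof.
have -> : \sum_(i < n) (a i + b i) ^+ 2 = \sum_(i < n) a i ^+ 2 + \sum_(i < n) b i ^+ 2 + 2 * \sum_(i < n) a i * b i.
  by rewrite mulr_sumr -!big_split /=; apply: eq_bigr => i _; ring.
have := CS _ a b.
have hA : 0 <= \sum_(i < n) a i ^+ 2 by apply: sumr_ge0 => i _; apply: sqr_ge0.
have hB : 0 <= \sum_(i < n) b i ^+ 2 by apply: sumr_ge0 => i _; apply: sqr_ge0.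
move: hA hB.
set s := \sum_(i < n) _ * _; set A := \sum_(i < n) _ ^+ 2; set B := \sum_(i < n) _ ^+ 2.
move=> hA hB hs.
have eA := sqr_sqrtr hA; have eB := sqr_sqrtr hB.
have gA := sqrtr_ge0 A; have gB := sqrtr_ge0 B.
have hst : s <= Num.sqrt A * Num.sqrt B.
  have : s ^+ 2 <= (Num.sqrt A * Num.sqrt B) ^+ 2 by rewrite exprMn eA eB.
  have := mulr_ge0 gA gB. nra.
have h0 : 0 <= Num.sqrt A + Num.sqrt B by apply: addr_ge0.
rewrite -(ger0_norm h0) -sqrtr_sqr ler_wsqrtr //.
nra.
Qed.


Lemma cabs0 : cabs (0 : R[i]) = 0.
Proof. by apply: complexI; rewrite cabsC normr0 rmorph0. Qed.

Lemma vnorm_ge0 n (x : 'cV[R[i]]_n) : 0 <= vnorm x.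
Proof. exact: sqrtr_ge0. Qed.

Lemma vnorm0 n : vnorm (0 : 'cV[R[i]]_n) = 0.
Proof.
rewrite /vnorm big1 ?sqrtr0 // => k _; by rewrite mxE cabs0 expr0n.
Qed.

Lemma vnormD n (x y : 'cV[R[i]]_n) : vnorm (x + y) <= vnorm x + vnorm y.
Proof.
apply: (le_trans _ (minkowski _ (fun k => cabs (x k 0)) (fun k => cabs (y k 0)))).
rewrite /vnorm; apply: ler_wsqrtr; apply: ler_sum => k _; rewrite mxE.
have := cabsD (x k 0) (y k 0); have := cabs_ge0 (x k 0 + y k 0).
have := cabs_ge0 (x k 0); have := cabs_ge0 (y k 0); nra.
Qed.

Lemma vnormN n (x : 'cV[R[i]]_n) : vnorm (- x) = vnorm x.
Proof. by rewrite /vnorm; congr Num.sqrt; apply: eq_bigr => k _; rewrite mxE cabsN. Qed.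

Lemma vnormB n (x y : 'cV[R[i]]_n) : vnorm (x - y) <= vnorm x + vnorm y.
Proof. by rewrite -(vnormN _ y) vnormD. Qed.

Lemma vnormZ n c (x : 'cV[R[i]]_n) : vnorm (c *: x) = cabs c * vnorm x.
Proof.
rewrite /vnorm; under eq_bigr do rewrite mxE cabsM exprMn.
by rewrite -mulr_sumr sqrtrM ?sqr_ge0 // sqrtr_sqr ger0_norm // cabs_ge0.
Qed.

Lemma vnorm_sum n m (f : 'I_m -> 'cV[R[i]]_n) :
  vnorm (\sum_(j < m) f j) <= \sum_(j < m) vnorm (f j).
Proof.
elim: m f => [|m IH] f; first by rewrite !big_ord0 vnorm0.
rewrite !big_ord_recr /=; apply: le_trans (vnormD _ _ _) _; apply: lerD => //; exact: IH.
Qed.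

Lemma cabs_le_vnorm n (x : 'cV[R[i]]_n) j : cabs (x j 0) <= vnorm x.
Proof.
rewrite -[cabs _]ger0_norm ?cabs_ge0 // -sqrtr_sqr /vnorm; apply: ler_wsqrtr.
rewrite (bigD1 j) //= lerDl; apply: sumr_ge0 => i _; exact: sqr_ge0.
Qed.

Lemma adjmxM m n p (A : 'M[R[i]]_(m, n)) (B : 'M[R[i]]_(n, p)) :
  adjmx (A *m B) = adjmx B *m adjmx A.
Proof. by rewrite /adjmx map_mxM trmx_mul. Qed.

Lemma adjmxK m n (A : 'M[R[i]]_(m, n)) : adjmx (adjmx A) = A.
Proof. by apply/matrixP => i j; rewrite !mxE conjcK. Qed.

Lemma nsqC n (x : 'cV[R[i]]_n) :
  (\sum_(k < n) cabs (x k 0) ^+ 2)%:C%C = (adjmx x *m x) 0 0.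
Proof.
rewrite rmorph_sum !mxE; apply: eq_bigr => k _; rewrite /adjmx !mxE; exact: cabs_sqC.
Qed.

Lemma vnorm_iso n (U : 'M[R[i]]_n) x : adjmx U *m U = 1%:M -> vnorm (U *m x) = vnorm x.
Proof.
move=> h; rewrite /vnorm; congr Num.sqrt; apply: complexI.
by rewrite !nsqC adjmxM -mulmxA (mulmxA (adjmx U)) h mul1mx.
Qed.

Lemma mx_bound n (A : 'M[R[i]]_n) :
  exists C, 0 <= C /\ forall x, vnorm (A *m x) <= C * vnorm x.
Proof.
exists (\sum_(j < n) vnorm (col j A)); split.
  by apply: sumr_ge0 => j _; apply: vnorm_ge0.
move=> x.
have -> : A *m x = \sum_(j < n) x j 0 *: col j A.
  apply/matrixP => i k; rewrite (ord1 k) !mxE summxE; apply: eq_bigr => j _.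
  by rewrite !mxE mulrC.
apply: le_trans (vnorm_sum _ _ _) _; rewrite mulr_suml; apply: ler_sum => j _.
rewrite vnormZ mulrC; apply: ler_wpM2l; [exact: vnorm_ge0 | exact: cabs_le_vnorm].
Qed.


Lemma spec_has_sup n (A : 'M[R[i]]_n) :
  has_sup [set vnorm (A *m x) | x in [set x : 'cV[R[i]]_n | vnorm x <= 1]].
Proof.
split.
  by exists (vnorm (A *m 0)); exists 0 => //=; rewrite vnorm0 ler01.
have [C [C0 hC]] := mx_bound n A.
exists C => y [x hx <-]; move: hx => /= hx.
have := hC x; have := vnorm_ge0 _ x; nra.
Qed.

Lemma spec_ub n (A : 'M[R[i]]_n) x : vnorm x <= 1 -> vnorm (A *m x) <= specnorm A.
Proof. by move=> hx; apply: (sup_upper_bound (spec_has_sup _ A)); exists x. Qed.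

Lemma specnorm_ge0 n (A : 'M[R[i]]_n) : 0 <= specnorm A.
Proof.
have := spec_ub _ A 0; rewrite mulmx0 vnorm0; apply; exact: ler01.
Qed.

Lemma spec_bound n (A : 'M[R[i]]_n) x : vnorm (A *m x) <= specnorm A * vnorm x.
Proof.
have [C [C0 hC]] := mx_bound n A.
have [v0|vp] := eqVneq (vnorm x) 0.
  by rewrite v0 mulr0; have := hC x; rewrite v0 mulr0.
have vpos : 0 < vnorm x by rewrite lt_def vp vnorm_ge0.
set r := (vnorm x)^-1.
have r0 : 0 <= r by rewrite invr_ge0 vnorm_ge0.
have := spec_ub _ A (r%:C%C *: x).
rewrite vnormZ cabs_real // mulVf // lexx -scalemxAr vnormZ cabs_real // => /(_ isT) h.
have e : vnorm (A *m x) = vnorm x * (r * vnorm (A *m x)) by rewrite mulrA divff // mul1r.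
rewrite e [specnorm A * _]mulrC; apply: ler_wpM2l => //; exact: vnorm_ge0.
Qed.

Lemma spec_le n (A : 'M[R[i]]_n) c :
  (forall x, vnorm x <= 1 -> vnorm (A *m x) <= c) -> specnorm A <= c.
Proof.
move=> h; apply: ge_sup; first exact: (spec_has_sup _ A).1.
by move=> y [x hx <-]; exact: h.
Qed.

End S.

Theorem lemma1 (R : realType) (N : nat)
    (S E V U : 'M[R[i]]_N) (lam m : 'rV[R[i]]_N) (eps : R) :
  unitary V -> unitary U ->
  S = V *m diag_mx lam *m adjmx V ->
  E = U *m diag_mx m *m adjmx U ->
  specnorm E <= eps ->
  exists EU : 'M[R[i]]_N,
    specnorm EU <= eps * ((specnorm (U - V) + 1) ^+ 2 - 1) /\
    forall i : 'I_N, E *m col i V = m 0 i *: col i V + EU *m col i V.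
Proof.
move=> [VV1 VV2] [UU1 UU2] _ hE hEe.
set M := diag_mx m.
exists (E - V *m M *m adjmx V); split.
- set d := specnorm (U - V); set e := specnorm E.
  have d0 : 0 <= d := specnorm_ge0 _ _ _.
  have e0 : 0 <= e := specnorm_ge0 _ _ _.
  have eps0 : 0 <= eps := le_trans e0 hEe.
  apply: (@le_trans _ _ (2 * d * e)); last first.
    have h1 : d * e <= d * eps by apply: ler_wpM2l.
    have h2 : 0 <= eps * d ^+ 2 by apply: mulr_ge0 => //; apply: sqr_ge0.
    nra.
  apply: spec_le => x hx.
  set y := adjmx V *m x.
  have hy : vnorm y = vnorm x by rewrite /y vnorm_iso // adjmxK.
  have ex : x = V *m y by rewrite /y mulmxA VV1 mul1mx.
  have EU : E *m U = U *m M by rewrite hE -!mulmxA UU2 mulmx1.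
  have EU_V : (E - V *m M *m adjmx V) *m V = (U - V) *m M - E *m (U - V).
    rewrite mulmxBl mulmxBr mulmxBl EU -!mulmxA VV2 mulmx1.
    by rewrite opprB [RHS]addrC addrA subrK.
  rewrite ex mulmxA EU_V mulmxBl -!mulmxA.
  apply: le_trans (vnormB _ _ _ _) _.
  have h1 : vnorm ((U - V) *m (M *m y)) <= d * (e * vnorm y).
    apply: le_trans (spec_bound _ _ _ _) _; apply: ler_wpM2l => //.
    have eM : M = adjmx U *m E *m U
      by rewrite hE -!mulmxA UU2 mulmx1 mulmxA UU2 mul1mx.
    rewrite eM -!mulmxA vnorm_iso ?adjmxK //.
    by apply: le_trans (spec_bound _ _ _ _) _; rewrite vnorm_iso.
  have h2 : vnorm (E *m ((U - V) *m y)) <= e * (d * vnorm y).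
    apply: le_trans (spec_bound _ _ _ _) _; apply: ler_wpM2l => //.
    exact: spec_bound.
  have := vnorm_ge0 _ _ x; rewrite -hy in hx *; move=> v0; have de : d * e * vnorm y <= d * e by rewrite ler_piMr // mulr_ge0.
  lra.
- move=> i.
  have hM : M *m delta_mx i (0 : 'I_1) = m 0 i *: delta_mx i (0 : 'I_1).
    apply/matrixP => a b; rewrite mul_diag_mx !mxE.
    by case: (eqVneq a i) => [->|ne] //=; rewrite !mulr0.
  have h : V *m M *m adjmx V *m col i V = m 0 i *: col i V.
    by rewrite colE -!mulmxA (mulmxA (adjmx V)) VV2 mul1mx hM scalemxAr.
  by rewrite mulmxBl h addrC subrK.
Qed.
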